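(* Let $S_1$ and $S_2$ be two XML Schemas, let $u\ge 0$ be the severity level, let $m$ be the maximum of the numbers of complex elements of $S_1$ and of $S_2$, and let $q$ be the maximum cardinality of a neighborhood $neighborhood(x,v)$, $0\le v\le u$, of an x-component $x$ of $S_1$ or $S_2$. Assuming the neighborhoods are available and each thesaurus lookup takes constant time, the values $synonymous(E_1,E_2,u)$ for all pairs of complex elements $E_1$ of $S_1$ and $E_2$ of $S_2$ (i.e. all synonymies at severity level $u$ between $S_1$ and $S_2$) can be computed in worst-case time $O((u+1)\, q^3\, m^2)$.
   Context: An x-component of an XML Schema $S$ is an element or an attribute declared in $S$; $XCompSet(S)$ is the set of x-components. A complex element is an element declared with a complex type; a simple element is one of simple type. For x-components $x_S,x_T$ of the same schema: $veryclose(x_S,x_T)$ iff $x_T=x_S$, or $x_T$ is an attribute of $x_S$, or $x_T$ is a simple sub-element of $x_S$; $close(x_S,x_T)$ iff $x_T$ is a complex sub-element of $x_S$, or $x_T$ is an element and $x_S$ has an IDREF/IDREFS attribute referring to $x_T$; $near$ is the disjunction of the two. The connection cost $CC(x_S,x_T)$ is $0$ if veryclose, $1$ if close and not veryclose, otherwise the minimum over directed paths of distinct x-components joined by $near$ pairs of the sum of pair costs ($0$ for veryclose pairs, $1$ for close pairs), and $\infty$ if no path exists. $neighborhood(x_S,j)=\{x_T\in XCompSet(S): CC(x_S,x_T)\le j\}$. Fix a thesaurus (a symmetric synonymy relation on names). For x-components $x_1$ of $S_1$, $x_2$ of $S_2$ and level $v$, $BG(v)$ is the bipartite graph with node sets $P(v)$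 (the x-components of $neighborhood(x_1,v)$) and $Q(v)$ (those of $neighborhood(x_2,v)$), with an edge between $p$ and $q$ iff their names are synonymous in the thesaurus; $A'(v)$ is a maximum matching and $\phi_{BG}(v)=\frac{2|A'(v)|}{|P(v)|+|Q(v)|}$. The neighborhoods at level $v$ are similar iff $\phi_{BG}(v)>1/2$, and $synonymous(x_1,x_2,u)$ is true iff they are similar at every level $v=0,\dots,u$. *)

(* Defs.v *)
From HB Require Import structures.
From mathcomp Require Import all_boot all_order all_algebra.
Set Implicit Arguments. Unset Strict Implicit. Unset Printing Implicit Defensive.
Import Order.TTheory GRing.Theory Num.Theory.

(* [xcomp] = XCompSet(S), the (finite) set of x-components of S.
   [is_elem x]   : x is an element (otherwise x is an attribute);
   [is_cplx x]   : x is declared with a complex type;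
   [attr_of x y] : y is an attribute of x;
   [sub_of x y]  : y is a sub-element of x;
   [idref x y]   : x has an IDREF/IDREFS attribute referring to y. *)
Record schema (Name : Type) := Schema {
  xcomp : finType;
  cname : xcomp -> Name;
  is_elem : pred xcomp;
  is_cplx : pred xcomp;
  attr_of : rel xcomp;
  sub_of : rel xcomp;
  idref : rel xcomp
}.

Section SchemaDefs.
Variables (Name : Type) (S : schema Name).
Local Notation X := (xcomp S).

Definition complex_elem (x : X) : bool := is_elem x && is_cplx x.
Definition simple_elem (x : X) : bool := is_elem x && ~~ is_cplx x.

Definition veryclose (xS xT : X) : bool :=
  [|| xT == xS, attr_of xS xT | sub_of xS xT && simple_elem xT].

Definition close (xS xT : X) : bool :=
  (sub_of xS xT && complex_elem xT) || (is_elem xT && idref xS xT).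

Definition near (xS xT : X) : bool := veryclose xS xT || close xS xT.

Definition pair_cost (a b : X) : nat := if veryclose a b then 0 else 1.

(* A directed path of distinct x-components  x = t_0, t_1, ..., t_k = y
   joined by near pairs is represented by the sequence [t_1; ...; t_k]. *)
Definition is_cpath (x : X) (s : seq X) (y : X) : bool :=
  [&& path near x s, uniq (x :: s) & last x s == y].

Definition path_cost (x : X) (s : seq X) : nat := sumn (pairmap pair_cost x s).

(* [CC_le x y j]  <=>  CC(x,y) <= j  (CC possibly infinite).
   In the "otherwise" case CC is the minimum of [path_cost] over the finitely
   many paths of distinct x-components (such a path has at most #|X|
   components, hence its tail has size < #|X|.+1); the minimum is <= j iff
   some path has cost <= j, and CC = infinity (never <= j) if there is none. *)
Definition CC_le (x y : X) (j : nat) : bool :=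
  if veryclose x y then true
  else if close x y then 1 <= j
  else [exists n : 'I_#|X|.+1, [exists t : n.-tuple X,
          is_cpath x t y && (path_cost x t <= j)]].

Definition neighborhood (x : X) (j : nat) : {set X} := [set y | CC_le x y j].

End SchemaDefs.

Section Synonymy.
Variables (Name : Type) (thes : rel Name) (S1 S2 : schema Name).
Local Notation X1 := (xcomp S1).
Local Notation X2 := (xcomp S2).

Definition is_matching (P : {set X1}) (Q : {set X2}) (M : {set X1 * X2}) : bool :=
  [forall e in M, [&& e.1 \in P, e.2 \in Q & thes (cname e.1) (cname e.2)]]
  && [forall e in M, forall e' in M, (e.1 == e'.1) || (e.2 == e'.2) ==> (e == e')].

Definition max_matching_size (P : {set X1}) (Q : {set X2}) : nat :=
  \max_(M : {set X1 * X2} | is_matching P Q M) #|M|.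

Definition phiBG (x1 : X1) (x2 : X2) (v : nat) : rat :=
  let P := neighborhood x1 v in
  let Q := neighborhood x2 v in
  ((2 * max_matching_size P Q)%:R / (#|P| + #|Q|)%:R)%R.

Definition similar_at (x1 : X1) (x2 : X2) (v : nat) : bool :=
  (2%:R^-1 < phiBG x1 x2 v)%R.

Definition synonymous (x1 : X1) (x2 : X2) (u : nat) : bool :=
  [forall v : 'I_u.+1, similar_at x1 x2 v].

Definition m_param : nat :=
  maxn #|[set x : X1 | complex_elem x]| #|[set x : X2 | complex_elem x]|.

Definition q_param (u : nat) : nat :=
  maxn (\max_(x : X1) \max_(v < u.+1) #|neighborhood x v|)
       (\max_(x : X2) \max_(v < u.+1) #|neighborhood x v|).

End Synonymy.

(* Cost model: a computation returns its value together with the number of  *)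
(* elementary steps it performed.  Unit-cost steps (RAM model): a loop       *)
(* iteration / function call, a comparison, an array read or write, and a    *)
(* thesaurus lookup (assumed constant time, as in the paper).  Allocating or *)
(* scanning an array of size n costs n.                                      *)
Definition Cost (A : Type) : Type := (A * nat)%type.
Definition retC {A} (a : A) : Cost A := (a, 0).
Definition bindC {A B} (m : Cost A) (f : A -> Cost B) : Cost B :=
  let: (a, n) := m in let: (b, k) := f a in (b, n + k).
Definition ticks (n : nat) : Cost unit := (tt, n).
Definition tick : Cost unit := ticks 1.

Notation "'DO' x <- m ; f" := (bindC m (fun x => f))
  (at level 200, x name, m at level 100, f at level 200).

(* The algorithm: for each pair of complex elements and each level v <= u,  *)
(* build BG(v) from the given neighborhoods and compute a maximum matching   *)
(* by the augmenting-path (Kuhn / Hungarian) method.                         *)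
Section Algorithm.
Variables (Name X1 X2 : Type) (thes : rel Name) (nm1 : X1 -> Name) (nm2 : X2 -> Name).

Section Kuhn.
Variables (pl : seq X1) (ql : seq X2).
Let nP := size pl.
Let nQ := size ql.

Definition edgeC (i j : nat) : Cost bool :=
  DO _ <- tick ;
  retC (match onth pl i, onth ql j with
        | Some a, Some b => thes (nm1 a) (nm2 b)
        | _, _ => false end).

(* try to find an augmenting path from left node i;
   vis : visited right nodes, mt : right node -> matched left node *)
Fixpoint tryC (k i : nat) (vis : seq bool) (mt : seq (option nat))
    : Cost (bool * seq bool * seq (option nat)) :=
  match k with
  | 0 => DO _ <- tick ; retC (false, vis, mt)
  | k'.+1 =>
    let fix scan (r : nat) (vis : seq bool) (mt : seq (option nat))
        : Cost (bool * seq bool * seq (option nat)) :=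
      match r with
      | 0 => DO _ <- tick ; retC (false, vis, mt)
      | r'.+1 =>
        let j := nQ - r in
        DO _ <- tick ;
        DO e <- edgeC i j ;
        if e && ~~ nth true vis j then
          let vis' := set_nth false vis j true in
          match nth None mt j with
          | None => retC (true, vis', set_nth None mt j (Some i))
          | Some i' =>
            DO res <- tryC k' i' vis' mt ;
            let: (b, vis'', mt'') := res in
            if b then retC (true, vis'', set_nth None mt'' j (Some i))
            else scan r' vis'' mt''
          end
        else scan r' vis mt
      end
    in DO _ <- tick ; scan nQ vis mt
  end.

Fixpoint kuhn_loop (r : nat) (mt : seq (option nat)) : Cost (seq (option nat)) :=
  match r with
  | 0 => retC mt
  | r'.+1 =>
    let i := nP - r in
    DO _ <- tick ;
    DO _ <- ticks nQ ;                      (* fresh visited array *)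
    DO res <- tryC nQ.+1 i (nseq nQ false) mt ;
    kuhn_loop r' res.2
  end.

Definition kuhnC : Cost nat :=
  DO _ <- ticks nQ ;                        (* fresh matching array *)
  DO mt <- kuhn_loop nP (nseq nQ None) ;
  DO _ <- ticks nQ ;                        (* count matched right nodes *)
  retC (count (fun o : option nat => o) mt).

(* phi_BG > 1/2  <=>  |P| + |Q| < 4 |A'| *)
Definition similarC : Cost bool :=
  DO mm <- kuhnC ;
  DO _ <- tick ;
  retC (nP + nQ < 4 * mm).

End Kuhn.

Variables (u : nat) (nb1 : X1 -> nat -> seq X1) (nb2 : X2 -> nat -> seq X2).

Fixpoint levelsC (E1 : X1) (E2 : X2) (r : nat) : Cost bool :=
  match r with
  | 0 => retC true
  | r'.+1 =>
    let v := u.+1 - r in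
    DO _ <- tick ;
    DO b <- similarC (nb1 E1 v) (nb2 E2 v) ;
    DO b' <- levelsC E1 E2 r' ;
    retC (b && b')
  end.

Definition synonymousC (E1 : X1) (E2 : X2) : Cost bool := levelsC E1 E2 u.+1.

Fixpoint mapC {A B} (f : A -> Cost B) (s : seq A) : Cost (seq B) :=
  match s with
  | [::] => retC [::]
  | x :: s' => DO _ <- tick ; DO y <- f x ; DO ys <- mapC f s' ; retC (y :: ys)
  end.

Definition all_synonymiesC (cl1 : seq X1) (cl2 : seq X2)
    : Cost (seq (seq ((X1 * X2) * bool))) :=
  mapC (fun E1 => mapC (fun E2 => DO b <- synonymousC E1 E2 ; retC ((E1, E2), b)) cl2) cl1.

End Algorithm.

(* Main.v *)
Require Import Defs.
From HB Require Import structures.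
From mathcomp Require Import all_boot all_order all_algebra.
From Stdlib Require Import Lia.
Set Implicit Arguments. Unset Strict Implicit. Unset Printing Implicit Defensive.

Ltac ssrconv := intros; repeat match goal with H : is_true (_ <= _) |- _ => move/leP: H => H end;
  try apply/leP;
  repeat match goal with H : context [addn _ _] |- _ => rewrite -plusE in H end;
  repeat match goal with H : context [muln _ _] |- _ => rewrite -multE in H end;
  repeat match goal with H : context [subn _ _] |- _ => rewrite -minusE in H end;
  rewrite -?plusE -?multE -?minusE.
Ltac ssrlia := ssrconv; lia.
Ltac ssrnia := ssrconv; nia.



Lemma nth_set_nth_lt (T : Type) (d d' : T) (s : seq T) j y m :
  j < size s -> nth d (set_nth d' s j y) m = if m == j then y else nth d s m.
Proof.
elim: s j m => [|x s IH] [|j] [|m] //= hj; rewrite IH //.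
Qed.

Section DFS.
Variables (Name X1 X2 : Type) (thes : rel Name) (nm1 : X1 -> Name) (nm2 : X2 -> Name)
  (pl : seq X1) (ql : seq X2).

Definition edge i j := match onth pl i, onth ql j with
  | Some a, Some b => thes (nm1 a) (nm2 b) | _, _ => false end.

Lemma edgeC_eq i j : edgeC thes nm1 nm2 pl ql i j = (edge i j, 1).
Proof. by []. Qed.

Lemma edge_lt i j : edge i j -> i < size pl /\ j < size ql.
Proof.
rewrite /edge; case E1: (onth pl i) => [a|] //; case E2: (onth ql j) => [b|] // _.
by split; rewrite -onthTE ?E1 ?E2.
Qed.

Definition Res := (bool * seq bool * seq (option nat))%type.

Section Scan.
Variables (rec : nat -> seq bool -> seq (option nat) -> Cost Res) (i : nat).
Fixpoint scanF (r : nat) (vis0 : seq bool) (mt0 : seq (option nat)) : Cost Res :=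
  match r with
  | 0 => DO _ <- tick; retC (false, vis0, mt0)
  | r'.+1 =>
      let j := size ql - r in
      DO _ <- tick;
      DO e <- edgeC thes nm1 nm2 pl ql i j;
      if e && ~~ nth true vis0 j
      then
       let vis' := set_nth false vis0 j true in
       match nth None mt0 j with
       | Some i' =>
           DO res <- rec i' vis' mt0;
           match res with
           | (true, vis'', mt'') => retC (true, vis'', set_nth None mt'' j (Some i))
           | (false, vis'', mt'') => scanF r' vis'' mt''
           end
       | None => retC (true, vis', set_nth None mt0 j (Some i))
       end
      else scanF r' vis0 mt0
  end.
End Scan.

Lemma tryC_S k i vis mt : tryC thes nm1 nm2 pl ql k.+1 i vis mt =
  let: (c, n) := scanF (tryC thes nm1 nm2 pl ql k) i (size ql) vis mt in (c, 1 + n).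
Proof. by []. Qed.

Local Notation nQ := (size ql).
Definition cnt (s : seq bool) := count id s.
Local Notation A := (2 * size ql + 2).

Definition Succ i (vis : seq bool) (mt mt' : seq (option nat)) :=
 [/\ size mt' = size mt,
   forall x, count (pred1 (Some x)) mt' = count (pred1 (Some x)) mt + (x == i),
   count (pred1 None) mt' + 1 = count (pred1 None) mt,
   forall j x, nth None mt' j = Some x -> nth None mt j = Some x \/ edge x j &
   forall j, nth true vis j -> nth None mt' j = nth None mt j].

Definition Fail lo i (vis : seq bool) (mt : seq (option nat)) vis' (mt' : seq (option nat)) :=
 [/\ mt' = mt,
   forall j, lo <= j -> edge i j -> nth true vis' j &
   forall j, nth true vis' j -> ~~ nth true vis j ->
     exists2 i', nth None mt j = Some i' & forall j', edge i' j' -> nth true vis' j'].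

Definition Gen (vis vis' : seq bool) :=
  [/\ size vis' = size vis, forall j, nth true vis j -> nth true vis' j & cnt vis <= cnt vis'].

Lemma Gen_trans v1 v2 v3 : Gen v1 v2 -> Gen v2 v3 -> Gen v1 v3.
Proof.
case=> s1 m1 c1 [s2 m2 c2]; split; first by rewrite s2.
- by move=> j /m1 /m2.
- exact: leq_trans c2.
Qed.

Lemma cnt_le s : cnt s <= size s.
Proof. exact: count_size. Qed.

Lemma scanF_S rec i r vis mt : scanF rec i r.+1 vis mt =
 let j := nQ - r.+1 in
 if edge i j && ~~ nth true vis j then
   match nth None mt j with
   | Some i' => let: (res, n) := rec i' (set_nth false vis j true) mt in
        let: (b2, vis2, mt2) := res in
        if b2 then ((true, vis2, set_nth None mt2 j (Some i)), 1 + (1 + (n + 0)))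
        else let: (res', n') := scanF rec i r vis2 mt2 in (res', 1 + (1 + (n + n')))
   | None => ((true, set_nth false vis j true, set_nth None mt j (Some i)), 1 + (1 + 0))
   end
 else let: (res', n') := scanF rec i r vis mt in (res', 1 + (1 + n')).
Proof.
rewrite [LHS]/= -/(edge i (nQ - r.+1)).
cbv zeta; case: (edge i _ && _) => //=; last by case: (scanF _ _ _ _ _).
case: (nth None mt _) => [i'|] //=; case: (rec _ _ _) => [[[[] v2] m2] n] //=; by case: (scanF _ _ _ _ _).
Qed.

Definition TSpec k := forall i vis mt b vis' mt' c,
  size vis = nQ -> size mt = nQ -> nQ < cnt vis + k ->
  tryC thes nm1 nm2 pl ql k i vis mt = ((b, vis', mt'), c) ->
  [/\ Gen vis vis', c + A * cnt vis <= A * (cnt vis' + 1) &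
      if b then Succ i vis mt mt' else Fail 0 i vis mt vis' mt'].

Lemma scan_spec k : TSpec k -> forall r i vis mt b vis' mt' c,
  size vis = nQ -> size mt = nQ -> r <= nQ -> nQ < cnt vis + k.+1 ->
  scanF (tryC thes nm1 nm2 pl ql k) i r vis mt = ((b, vis', mt'), c) ->
  [/\ Gen vis vis', c + A * cnt vis <= 2 * r + 1 + A * cnt vis' &
      if b then Succ i vis mt mt' else Fail (nQ - r) i vis mt vis' mt'].
Proof.
move=> IHk; elim=> [|r IH] i vis mt b vis' mt' c hv hm hr hk.
  case=> <- <- <- <-; split; [by split | by ssrlia | ].
  split=> //.
  - by move=> j; rewrite subn0 => hj /edge_lt [_]; rewrite ltnNge hj.
  - by move=> j ->.
rewrite scanF_S; cbv zeta.
set j := nQ - r.+1.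
have hj : j < nQ by rewrite /j; ssrlia.
case: ifP => [/andP [he hnv] | hne].
  have hvj : nth true vis j = false by apply/negbTE.
  set vis1 := set_nth false vis j true.
  have hjv : j < size vis by rewrite hv.
  have sv1 : size vis1 = nQ by rewrite size_set_nth hv; apply/maxn_idPr.
  have nv1 : forall m, nth true vis1 m = if m == j then true else nth true vis m.
    by move=> m; rewrite nth_set_nth_lt.
  have cv1 : cnt vis1 = cnt vis + 1.
    rewrite /cnt count_set_nth_ltn // (set_nth_default true) // hvj /=; ssrlia.
  have G1 : Gen vis vis1.
    split=> //; first by rewrite sv1.
    - by move=> m hm'; rewrite nv1; case: eqP.
    - by rewrite cv1 leq_addr.
  have hjm : j < size mt by rewrite hm.
  case Em: (nth None mt j) => [i'|].
  - case Er: (tryC thes nm1 nm2 pl ql k i' vis1 mt) => [[[b2 vis2] mt2] c2].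
    have hk1 : nQ < cnt vis1 + k by rewrite cv1; ssrlia.
    have [G2 C2 S2] := IHk _ _ _ _ _ _ _ sv1 hm hk1 Er.
    case: b2 {Er} S2 => S2.
    + case=> <- <- <- <-.
      case: S2 => sz2 cs2 cn2 e2 u2.
      have m2j : nth None mt2 j = Some i' by rewrite u2 ?nv1 ?eqxx.
      have hj2 : j < size mt2 by rewrite sz2.
      split.
      * exact: Gen_trans G1 G2.
      * move: C2; rewrite cv1 mulnDr; ssrlia.
      split.
      * by rewrite size_set_nth sz2; apply/maxn_idPr.
      * move=> x; rewrite count_set_nth_ltn // m2j cs2.
        have -> : pred1 (Some x) (Some i') = (x == i') by rewrite /= eq_sym.
        have -> : pred1 (Some x) (Some i) = (x == i) by rewrite /= eq_sym.
        by case: (x == i'); case: (x == i); ssrlia.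
      * by rewrite count_set_nth_ltn // m2j /= addn0 subn0.
      * move=> j0 x; rewrite nth_set_nth_lt //; case: eqP => [-> [<-]|_ /e2]; by auto.
      * move=> j0 hj0; rewrite nth_set_nth_lt //; case: eqP => [e0|_].
          by move: hj0; rewrite e0 hvj.
        by apply: u2; rewrite nv1; case: eqP.
    + case: (S2) => e2 n2 cl2; subst mt2.
      case: (G2) => s2 m2 c2'.
      case Es: (scanF (tryC thes nm1 nm2 pl ql k) i r vis2 mt) => [[[b3 v3] m3] c3] [] <- <- <- <-.
      have hk2 : nQ < cnt vis2 + k.+1 by move: (c2'); rewrite cv1; ssrlia.
      have sv2 : size vis2 = nQ by rewrite s2.
      have [G3 C3 S3] := IH _ _ _ _ _ _ _ sv2 hm (ltnW hr) hk2 Es.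
      split.
      * exact: Gen_trans G1 (Gen_trans G2 G3).
      * move: C2 C3; rewrite cv1 mulnDr; ssrlia.
      case: b3 {Es} S3 => S3.
      * case: S3 => ? ? ? ? u3; split=> // m hm'; apply: u3.
        by case: G1 => _ /(_ m hm') /m2.
      * case: S3 => -> n3 cl3; split=> //.
        - move=> m hm' hem; case: (m =P j) => [->|ne].
            by case: G3 => _ + _; apply; apply: m2; rewrite nv1 eqxx.
          apply: n3 => //; move: hm' ne; rewrite /j; ssrlia.
        - move=> m hm' hm0.
          case h2: (nth true vis2 m); last by apply: cl3; rewrite ?h2.
          case h1: (nth true vis1 m).
            move: h1; rewrite nv1; case: eqP => [-> _|]; last by rewrite (negbTE hm0).
            exists i' => // j' /n2 => /(_ (leq0n _)) hv2.
            by case: G3 => _ + _; apply.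
          have [i'' H1 H2] := cl2 m h2 (negbT h1).
          exists i'' => // j' /H2 hv2; by case: G3 => _ + _; apply.
  - case=> <- <- <- <-; split=> //.
    + move: (leq0n r); rewrite cv1 mulnDr; ssrlia.
    split.
    + by rewrite size_set_nth hm; apply/maxn_idPr.
    + move=> x; rewrite count_set_nth_ltn // Em.
      have -> : pred1 (Some x) (Some i) = (x == i) by rewrite /= eq_sym.
      have -> : pred1 (Some x) None = false by [].
      by rewrite subn0.
    + rewrite count_set_nth_ltn // Em.
      have -> : pred1 (None : option nat) (Some i) = false by [].
      have -> : pred1 (None : option nat) None = true by rewrite /= eqxx.
      have : 0 < count (pred1 None) mt.
        by rewrite -has_count; apply/hasP; exists None => //; rewrite -Em mem_nth.
      by rewrite addn0 => h; rewrite subnK.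
    + move=> j0 x; rewrite nth_set_nth_lt //; case: eqP => [-> [<-]|_ ->]; by auto.
    + move=> j0 hj0; rewrite nth_set_nth_lt //; case: eqP => // e0.
      by move: hj0; rewrite e0 hvj.
case Es: (scanF (tryC thes nm1 nm2 pl ql k) i r vis mt) => [[[b3 v3] m3] c3] [] <- <- <- <-.
have [G3 C3 S3] := IH _ _ _ _ _ _ _ hv hm (ltnW hr) hk Es.
split=> //; first by move: C3; ssrlia.
case: b3 {Es} S3 => // [[-> n3 cl3]]; split=> // m hm' hem.
case: (m =P j) => [e|ne].
  move: hne; rewrite -e hem /= => /negbFE; by case: G3 => _ + _; apply.
apply: n3 => //; move: hm' ne; rewrite /j; ssrlia.
Qed.


Lemma tryC_spec k : TSpec k.
Proof.
elim: k => [|k IHk] i vis mt b vis' mt' c hv hm hk.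
  by move: hk; rewrite addn0 -hv ltnNge cnt_le.
rewrite tryC_S.
case Es: (scanF (tryC thes nm1 nm2 pl ql k) i nQ vis mt) => [[[b3 v3] m3] c3] [] <- <- <- <-.
have [G3 C3 S3] := scan_spec IHk hv hm (leqnn _) hk Es.
split=> //; first by move: C3; rewrite mulnDr; ssrlia.
by rewrite subnn in S3.
Qed.

End DFS.



Lemma onth_index (T : eqType) (s : seq T) a : a \in s -> onth s (index a s) = Some a.
Proof.
elim: s => //= x s IH; rewrite inE eq_sym; case: eqP => [->|_] //= /IH.
Qed.

Lemma onth_Some_uniq (T : eqType) (s : seq T) i a : uniq s -> onth s i = Some a ->
  a \in s /\ index a s = i.
Proof.
elim: s i => [|x s IH] [|i] //=.
  by move=> _ [->]; split; [exact: mem_head | rewrite /= eqxx].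
case/andP=> nx us /(IH _ us) [ha hi]; rewrite inE ha orbT; split=> //.
case: eqP => [e|_]; last by rewrite hi.
by move: nx; rewrite e ha.
Qed.

Lemma count1_nth_inj (T : eqType) (s : seq T) (x0 y : T) j1 j2 :
  count (pred1 y) s <= 1 -> j1 < size s -> j2 < size s ->
  nth x0 s j1 = y -> nth x0 s j2 = y -> j1 = j2.
Proof.
elim: s j1 j2 => [|x s IH] [|j1] [|j2] //= hc h1 h2 e1 e2.
- have : y \in s by rewrite -e2 mem_nth.
  rewrite -has_pred1 has_count => hp; move: hc; rewrite e1 eqxx /=; ssrlia.
- have : y \in s by rewrite -e1 mem_nth.
  rewrite -has_pred1 has_count => hp; move: hc; rewrite e2 eqxx /=; ssrlia.
- congr S; apply: (IH j1 j2) => //; move: hc; case: (x == y) => /=; ssrlia.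
Qed.

Lemma count_some_none (s : seq (option nat)) :
  count (fun o : option nat => o) s + count (pred1 None) s = size s.
Proof. by elim: s => //= [[x|] s IH] /=; rewrite -IH; ssrlia. Qed.

Lemma nth_Some_mem (T : eqType) (s : seq (option T)) j x :
  nth None s j = Some x -> j < size s /\ Some x \in s.
Proof.
move=> e; have hj : j < size s by rewrite ltnNge; apply/negP => /(nth_default None); rewrite e.
by split=> //; rewrite -e mem_nth.
Qed.

Section Loop.
Variables (Name : Type) (thes : rel Name) (S1 S2 : schema Name)
  (pl : seq (xcomp S1)) (ql : seq (xcomp S2)).
Hypotheses (upl : uniq pl) (uql : uniq ql).
Local Notation X1 := (xcomp S1).
Local Notation X2 := (xcomp S2).
Local Notation nm1 := (@cname _ S1).
Local Notation nm2 := (@cname _ S2).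
Local Notation edge := (edge thes nm1 nm2 pl ql).
Local Notation nQ := (size ql).
Local Notation nP := (size pl).
Local Notation A := (2 * size ql + 2).

Lemma edge_idx a b : a \in pl -> b \in ql -> edge (index a pl) (index b ql) = thes (nm1 a) (nm2 b).
Proof. by move=> ha hb; rewrite /edge onth_index // onth_index. Qed.

Lemma edge_inv i j : edge i j -> exists a b, [/\ a \in pl, b \in ql, index a pl = i,
  index b ql = j & thes (nm1 a) (nm2 b)].
Proof.
rewrite /edge; case E1: (onth pl i) => [a|] //; case E2: (onth ql j) => [b|] // h.
have [ha ia] := onth_Some_uniq upl E1; have [hb ib] := onth_Some_uniq uql E2.
by exists a, b.
Qed.

Definition Cov k (CL : {set X1}) (CR : {set X2}) :=
  forall a b, a \in pl -> index a pl < k -> b \in ql -> thes (nm1 a) (nm2 b) ->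
    (a \in CL) || (b \in CR).

Definition Inv k (mt : seq (option nat)) :=
  [/\ size mt = nQ,
   forall j x, nth None mt j = Some x -> edge x j /\ x < k,
   forall x, count (pred1 (Some x)) mt <= 1 &
   exists CL CR, Cov k CL CR /\ #|CL| + #|CR| <= count (fun o : option nat => o) mt].

Lemma Inv0 : Inv 0 (nseq nQ None).
Proof.
split.
- by rewrite size_nseq.
- by move=> j x; rewrite nth_nseq; case: ifP.
- by move=> x; rewrite count_nseq /= mul0n.
- by exists set0, set0; split; [move=> a b _; rewrite ltn0 | rewrite !cards0].
Qed.

Lemma step k0 mt b vis' mt' c : k0 < nP -> Inv k0 mt ->
  tryC thes nm1 nm2 pl ql nQ.+1 k0 (nseq nQ false) mt = ((b, vis', mt'), c) ->
  Inv k0.+1 mt' /\ c <= A * (nQ + 1).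
Proof.
move=> hk0 [sm vm im [CL [CR [cov ccard]]]] Et.
have [a0 _] : exists a0 : X1, true by move: hk0; case: (pl) => [|a ?] //; exists a.
have hs : size (nseq nQ false) = nQ by rewrite size_nseq.
have hc0 : cnt (nseq nQ false) = 0 by rewrite /cnt count_nseq mul0n.
have hk : nQ < cnt (nseq nQ false) + nQ.+1 by rewrite hc0.
have [[sv _ _] C S] := tryC_spec hs sm hk Et.
split; last first.
  move: C; rewrite hc0 muln0 addn0 => C; apply: leq_trans C _.
  by have := cnt_le vis'; rewrite sv hs => h; rewrite leq_mul2l leq_add2r h orbT.
have memk : forall x, Some x \in mt -> x < k0.
  by move=> x /(nth_index None) /vm [].
case: b {Et} S => S.
- case: S => sz cs cn ev uv.
  split.
  + by rewrite sz.
  + move=> j x hj; have [_ hmem] := nth_Some_mem hj; split.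
      by case: (ev _ _ hj) => // /vm [].
    case: (x =P k0) => [-> //|ne].
    move: hmem; rewrite -has_pred1 has_count cs (introF eqP ne) addn0 -has_count has_pred1.
    by move/memk => h; apply: ltnW.
  + move=> x; rewrite cs; case: (x =P k0) => [->|ne]; last by rewrite addn0.
    have h0 : Some k0 \notin mt by apply/negP => /memk; rewrite ltnn.
    by rewrite (count_memPn h0).
  + exists (CL :|: [set a | (a \in pl) && (index a pl == k0)]), CR; split.
    * move=> a b ha hi hb ht; rewrite !inE.
      case: (index a pl =P k0) => [e|ne]; first by rewrite ha /= orbT.
      have hi' : index a pl < k0 by move: hi ne; rewrite ltnS leq_eqVlt; case: eqP.
      by case/orP: (cov a b ha hi' hb ht) => ->; rewrite ?orbT.
    * have c1 : #|[set a | (a \in pl) && (index a pl == k0)]| <= 1.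
        rewrite -(cards1 (nth a0 pl k0)); apply: subset_leq_card; apply/subsetP => a.
        by rewrite !inE => /andP [ha /eqP <-]; rewrite nth_index.
      have : count (fun o : option nat => o) mt' = count (fun o : option nat => o) mt + 1.
        have := count_some_none mt; have := count_some_none mt'; rewrite sz; ssrlia.
      move=> ->; apply: leq_trans (leq_add (leq_card_setU _ _) (leqnn _)) _.
      move: ccard c1; ssrlia.
- case: S => e hn hcl; subst mt'.
  split=> //.
  + by move=> j x /vm [? ?]; split => //; apply: ltnW.
  have nseqF : forall j, j < nQ -> ~~ nth true (nseq nQ false) j by move=> j hj; rewrite nth_nseq hj.
  pose B := [set b | (b \in ql) && nth true vis' (index b ql)].
  pose AA := [set a | (a \in pl) && has (fun j => nth true vis' j && (nth None mt j == Some (index a pl))) (iota 0 nQ)].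
  exists (CL :\: AA), (CR :|: B); split.
  + move=> a b ha hi hb ht; rewrite in_setD in_setU.
    have hB : b \in B -> (a \notin AA) && (a \in CL) || ((b \in CR) || (b \in B)).
      by move=> ->; rewrite !orbT.
    have eab := edge_idx ha hb; rewrite ht in eab.
    case hA: (a \in AA).
      suff hbB : b \in B by rewrite hbB !orbT.
      move: hA; rewrite inE ha /= => /hasP [j jin /andP [vj /eqP mj]].
      move: jin; rewrite mem_iota add0n => jlt.
      have [i' mi' ni'] := hcl j vj (nseqF j jlt).
      rewrite mi' in mj; case: mj => ei.
      by rewrite inE hb /=; apply: ni'; rewrite ei eab.
    rewrite /=.
    case: (index a pl =P k0) => [e|ne].
      suff hbB : b \in B by rewrite hbB !orbT.
      by rewrite inE hb /=; apply: hn => //; rewrite -e.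
    have hi' : index a pl < k0 by move: hi ne; rewrite ltnS leq_eqVlt; case: eqP.
    by case/orP: (cov a b ha hi' hb ht) => ->; rewrite ?orbT.
  + pose f (b : X2) := nth a0 pl (odflt 0 (nth None mt (index b ql))).
    have key : forall b, b \in B :\: CR -> exists2 i', nth None mt (index b ql) = Some i' & f b \in CL :&: AA.
      move=> b; rewrite !inE => /andP [nbR /andP [hb vb]].
      have hbl : index b ql < nQ by rewrite index_mem.
      have [i' mi' _] := hcl _ vb (nseqF _ hbl).
      exists i' => //.
      have [ei' li'] := vm _ _ mi'.
      have [il _] := edge_lt ei'.
      have fa : f b = nth a0 pl i' by rewrite /f mi'.
      have ha : f b \in pl by rewrite fa mem_nth.
      have ia : index (f b) pl = i' by rewrite fa index_uniq.
      rewrite ha /=; apply/andP; split.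
        have hia : index (f b) pl < k0 by rewrite ia.
        have := cov (f b) b ha hia hb.
        rewrite -edge_idx // ia ei' => /(_ isT); by rewrite (negbTE nbR) orbF.
      apply/hasP; exists (index b ql); first by rewrite mem_iota add0n index_mem.
      by rewrite vb mi' ia eqxx.
    have finj : {in B :\: CR &, injective f}.
      move=> b1 b2 h1 h2 e12.
      have [i1 m1 _] := key _ h1.
      have [i2 m2 _] := key _ h2.
      have hb1 : b1 \in ql by move: h1; rewrite !inE => /and3P [].
      have hb2 : b2 \in ql by move: h2; rewrite !inE => /and3P [].
      have [l1 _] := edge_lt (proj1 (vm _ _ m1)).
      have [l2 _] := edge_lt (proj1 (vm _ _ m2)).
      move: e12; rewrite /f m1 m2 /= => e12.
      have ei : i1 = i2 by apply/eqP; rewrite -(nth_uniq a0 l1 l2 upl) e12.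
      subst i2.
      have s1 : index b1 ql < size mt by rewrite sm index_mem.
      have s2 : index b2 ql < size mt by rewrite sm index_mem.
      have ej := count1_nth_inj (im i1) s1 s2 m1 m2.
      by rewrite -(nth_index b1 hb1) ej nth_index.
    have cB : #|B :\: CR| <= #|CL :&: AA|.
      rewrite -(card_in_imset finj); apply: subset_leq_card; apply/subsetP => a /imsetP [b hb ->].
      by have [? _ ->] := key _ hb.
    have cI : #|CL :&: AA| <= #|CL| by apply: subset_leq_card; apply: subsetIl.
    have eU : #|CR :|: B| = #|CR| + #|B :\: CR|.
      by rewrite cardsU -(cardsID CR B) setIC; ssrlia.
    rewrite cardsD eU; move: ccard cB cI; ssrlia.
Qed.

Lemma kuhn_loop_S r mt : kuhn_loop thes nm1 nm2 pl ql r.+1 mt =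
  let: (b, k) := (let: (b, k) := (let: (res, n3) := tryC thes nm1 nm2 pl ql nQ.+1 (nP - r.+1) (nseq nQ false) mt in
      let: (b', k') := kuhn_loop thes nm1 nm2 pl ql r res.2 in (b', n3 + k')) in (b, nQ + k)) in (b, 1 + k).
Proof. by []. Qed.

Lemma loop_spec r mt : r <= nP -> Inv (nP - r) mt ->
  Inv nP (kuhn_loop thes nm1 nm2 pl ql r mt).1 /\
  (kuhn_loop thes nm1 nm2 pl ql r mt).2 <= r * (1 + nQ + A * (nQ + 1)).
Proof.
elim: r mt => [|r IH] mt hr hI; first by rewrite subn0 in hI.
rewrite kuhn_loop_S.
case Et: (tryC thes nm1 nm2 pl ql nQ.+1 (nP - r.+1) (nseq nQ false) mt) => [[[b vis'] mt'] c].
have hk0 : nP - r.+1 < nP by ssrlia.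
have [hI' hc] := step hk0 hI Et.
have e : (nP - r.+1).+1 = nP - r by ssrlia.
rewrite e in hI'.
have [IH1 IH2] := IH mt' (ltnW hr) hI'.
move: IH1 IH2; case: (kuhn_loop thes nm1 nm2 pl ql r mt') => m n /= IH1 IH2; split=> //.
rewrite mulSn; move: hc IH2; ssrlia.
Qed.

Lemma card_filter_set (T : finType) (s : seq T) (p : pred T) : uniq s ->
  #|[set x | (x \in s) && p x]| = count p s.
Proof.
move=> us; rewrite -size_filter -(card_uniqP _); last exact: filter_uniq.
by apply: eq_card => x; rewrite inE mem_filter andbC.
Qed.

Lemma kuhn_max mt (P : {set X1}) (Q : {set X2}) :
  (forall a, (a \in P) = (a \in pl)) -> (forall b, (b \in Q) = (b \in ql)) ->
  Inv nP mt -> count (fun o : option nat => o) mt = @max_matching_size _ thes S1 S2 P Q.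
Proof.
move=> hP hQ [sm vm im [CL [CR [cov ccard]]]].
apply/eqP; rewrite eqn_leq; apply/andP; split.
- pose M := [set e : X1 * X2 | [&& e.1 \in pl, e.2 \in ql & nth None mt (index e.2 ql) == Some (index e.1 pl)]].
  have hM : is_matching thes P Q M.
    apply/andP; split.
      apply/forallP => e; apply/implyP; rewrite inE => /and3P [h1 h2 /eqP h3].
      rewrite hP hQ h1 h2 /= -edge_idx //; exact: (proj1 (vm _ _ h3)).
    apply/forallP => e; apply/implyP; rewrite inE => /and3P [h1 h2 /eqP h3].
    apply/forallP => e'; apply/implyP; rewrite inE => /and3P [h1' h2' /eqP h3'].
    apply/implyP => /orP [/eqP h|/eqP h].
      rewrite h in h3.
      have s1 : index e.2 ql < size mt by rewrite sm index_mem.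
      have s2 : index e'.2 ql < size mt by rewrite sm index_mem.
      have ej := count1_nth_inj (im _) s1 s2 h3 h3'.
      have e2 : e.2 = e'.2 by rewrite -(nth_index e.2 h2) ej nth_index.
      by case: e e' h e2 {h1 h2 h3 h1' h2' h3' s1 s2 ej} => [? ?] [? ?] /= -> ->.
    rewrite h h3' in h3; case: h3 => h3.
    have e1 : e.1 = e'.1 by rewrite -(nth_index e.1 h1) -h3 nth_index.
    by case: e e' h e1 {h1 h2 h1' h2' h3 h3'} => [? ?] [? ?] /= -> ->.
  apply: leq_trans (leq_bigmax_cond _ hM).
  apply: leq_trans (leq_imset_card snd M).
  have -> : count (fun o : option nat => o) mt =
            #|[set b | (b \in ql) && (nth None mt (index b ql) : bool)]|.
    rewrite card_filter_set //.
    case: (posnP nQ) => [q0|qp].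
      by move: sm; rewrite q0 => /size0nil ->; move: q0 => /size0nil ->.
    have [b0 _] : exists b0 : X2, true by move: qp; case: (ql) => [|b ?] //; exists b.
    have em : mt = map (fun b => nth None mt (index b ql)) ql.
      apply: (@eq_from_nth _ None); first by rewrite size_map.
      by move=> k hk; rewrite (nth_map b0) -?sm // index_uniq // -sm.
    by rewrite {1}em count_map.
  apply: subset_leq_card; apply/subsetP => b; rewrite inE => /andP [hb].
  case E: (nth None mt (index b ql)) => [i|] // _.
  have [ei li] := vm _ _ E.
  have [il _] := edge_lt ei.
  have [a0 _] : exists a0 : X1, true by move: il; case: (pl) => [|a ?] //; exists a.
  apply/imsetP; exists (nth a0 pl i, b) => //.
  by rewrite /M inE /= mem_nth // hb index_uniq // E eqxx.
- apply/bigmax_leqP => M /andP [/forallP h1 /forallP h2].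
  apply: leq_trans ccard.
  pose B := [set e : X1 * X2 | e.1 \in CL].
  rewrite -(cardsID B M).
  have mi : forall e e', e \in M -> e' \in M -> (e.1 == e'.1) || (e.2 == e'.2) -> e = e'.
    move=> e e' he he' h; move: (h2 e); rewrite he /= => /forallP /(_ e').
    by rewrite he' h /= => /eqP.
  apply: leq_add.
  + have inj1 : {in M :&: B &, injective (@fst X1 X2)}.
      move=> e e' /setIP [he _] /setIP [he' _] h; apply: mi => //; by rewrite h eqxx.
    rewrite -(card_in_imset inj1); apply: subset_leq_card; apply/subsetP => a.
    by case/imsetP => e /setIP [_]; rewrite inE => ? ->.
  + have inj2 : {in M :\: B &, injective (@snd X1 X2)}.
      move=> e e' /setDP [he _] /setDP [he' _] h; apply: mi => //; by rewrite h eqxx orbT.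
    rewrite -(card_in_imset inj2); apply: subset_leq_card; apply/subsetP => b.
    case/imsetP => e /setDP [he]; rewrite inE => nB ->.
    move: (h1 e); rewrite he /= hP hQ => /and3P [ha hb ht].
    have hi : index e.1 pl < nP by rewrite index_mem.
    by have := cov _ _ ha hi hb ht; rewrite (negbTE nB).
Qed.

Import GRing.Theory Num.Theory.
Lemma half_lt (a n : nat) : (0 < a)%N -> ((2%:R : rat)^-1 < (2 * n)%:R / a%:R)%R = (a < 4 * n)%N.
Proof.
move=> ha.
rewrite ltr_pdivlMr ?ltr0n // mulrC ltr_pdivrMr ?ltr0n // -natrM ltr_nat.
by rewrite mulnC mulnA.
Qed.

Lemma similarC_ok x1 x2 v :
  (forall y, (y \in pl) = (y \in neighborhood x1 v)) ->
  (forall y, (y \in ql) = (y \in neighborhood x2 v)) ->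
  (similarC thes nm1 nm2 pl ql).1 = similar_at thes x1 x2 v /\
  (similarC thes nm1 nm2 pl ql).2 <= 2 * nQ + 1 + nP * (1 + nQ + A * (nQ + 1)).
Proof.
move=> hp hq.
have hI : Inv (nP - nP) (nseq nQ None) by rewrite subnn; exact: Inv0.
have [I C] := loop_spec (leqnn _) hI.
have := kuhn_max (P := neighborhood x1 v) (Q := neighborhood x2 v) (fun a => esym (hp a)) (fun b => esym (hq b)) I.
move: I C; rewrite /similarC /kuhnC /=.
case: (kuhn_loop thes nm1 nm2 pl ql nP (nseq nQ None)) => m n /= _ C hm.
split; last by move: C; ssrlia.
have cP : #|neighborhood x1 v| = nP.
  by rewrite -(card_uniqP upl); apply: eq_card => y; rewrite hp.
have cQ : #|neighborhood x2 v| = nQ.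
  by rewrite -(card_uniqP uql); apply: eq_card => y; rewrite hq.
rewrite /similar_at /phiBG cP cQ -hm half_lt //.
have : x1 \in pl by rewrite hp inE /CC_le /veryclose eqxx.
by case: (pl) => // ? ? _; rewrite addSn.
Qed.

End Loop.

Definition Fq q := 2 * q + 1 + q * (1 + q + (2 * q + 2) * (q + 1)).

Lemma Fq_mono p q r : p <= r -> q <= r -> 2 * q + 1 + p * (1 + q + (2 * q + 2) * (q + 1)) <= Fq r.
Proof. rewrite /Fq => hp hq; repeat (apply: leq_add || apply: leq_mul) => //. Qed.

Lemma Fq_le q : 0 < q -> 1 + Fq q <= 14 * q ^ 3.
Proof. rewrite /Fq expnS expnS expn1 => hq; ssrnia. Qed.

Lemma mapC_spec (A B : Type) (f : A -> Cost B) s :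
  (mapC f s).1 = map (fun x => (f x).1) s /\ (mapC f s).2 = sumn (map (fun x => 1 + (f x).2) s).
Proof.
elim: s => //= x s [].
case: (mapC f s) => ys k /= -> ->; case: (f x) => y n /=; split=> //; ssrlia.
Qed.

Lemma sumn_le (T : eqType) (f : T -> nat) s K : (forall x, x \in s -> f x <= K) ->
  sumn (map f s) <= size s * K.
Proof.
elim: s => //= x s IH h; rewrite mulSn leq_add ?h ?mem_head //.
by apply: IH => y hy; apply: h; rewrite inE hy orbT.
Qed.

Section Final.
Variables (Name : Type) (thes : rel Name) (S1 S2 : schema Name) (u : nat)
  (nb1 : xcomp S1 -> nat -> seq (xcomp S1)) (nb2 : xcomp S2 -> nat -> seq (xcomp S2)).
Local Notation nm1 := (@cname _ S1).
Local Notation nm2 := (@cname _ S2).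

Lemma levelsC_S E1 E2 r : levelsC thes nm1 nm2 u nb1 nb2 E1 E2 r.+1 =
  let: (b, k) := (let: (b0, n) := similarC thes nm1 nm2 (nb1 E1 (u.+1 - r.+1)) (nb2 E2 (u.+1 - r.+1)) in
     let: (b, k) := (let: (b', n') := levelsC thes nm1 nm2 u nb1 nb2 E1 E2 r in (b0 && b', n' + 0)) in
     (b, n + k)) in (b, 1 + k).
Proof. by []. Qed.

Lemma levels_ok E1 E2 q :
  (forall v, v <= u -> uniq (nb1 E1 v) /\ (forall y, (y \in nb1 E1 v) = (y \in neighborhood E1 v))) ->
  (forall v, v <= u -> uniq (nb2 E2 v) /\ (forall y, (y \in nb2 E2 v) = (y \in neighborhood E2 v))) ->
  (forall v, v <= u -> size (nb1 E1 v) <= q /\ size (nb2 E2 v) <= q) ->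
  forall r, r <= u.+1 ->
  (levelsC thes nm1 nm2 u nb1 nb2 E1 E2 r).1 = all (similar_at thes E1 E2) (iota (u.+1 - r) r) /\
  (levelsC thes nm1 nm2 u nb1 nb2 E1 E2 r).2 <= r * (1 + Fq q).
Proof.
move=> h1 h2 hq; elim=> [|r IH] hr //.
rewrite levelsC_S.
have hv : u.+1 - r.+1 <= u by ssrlia.
have [u1 m1] := h1 _ hv; have [u2 m2] := h2 _ hv; have [q1 q2] := hq _ hv.
have [s1 s2] := similarC_ok thes u1 u2 m1 m2.
have [IH1 IH2] := IH (ltnW hr).
move: s1 s2 IH1 IH2.
case: (similarC thes nm1 nm2 (nb1 E1 (u.+1 - r.+1)) (nb2 E2 (u.+1 - r.+1))) => b0 n /= -> s2.
case: (levelsC thes nm1 nm2 u nb1 nb2 E1 E2 r) => b' n' /= -> c'.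
split.
  have e : (u.+1 - r.+1).+1 = u.+1 - r by ssrlia.
  by rewrite e.
have := Fq_mono q1 q2; move: s2 c'; rewrite mulSn; ssrlia.
Qed.

End Final.

Lemma bind_ret (B C : Type) (X : Cost B) (p : C) :
  (DO b <- X; retC (p, b)) = ((p, X.1), X.2 + 0).
Proof. by case: X. Qed.

Lemma syn_all (Name : Type) (thes : rel Name) (S1 S2 : schema Name) (E1 : xcomp S1) (E2 : xcomp S2) u :
  synonymous thes E1 E2 u = all (similar_at thes E1 E2) (iota 0 u.+1).
Proof.
rewrite /synonymous; apply/forallP/allP => [h v | h v].
  by rewrite mem_iota add0n => hv; exact: (h (Ordinal hv)).
by apply: h; rewrite mem_iota add0n ltn_ord.
Qed.

Lemma final_arith (n1 n2 m q u : nat) : n1 <= m -> n2 <= m -> 0 < q ->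
  n1 * (1 + n2 * (1 + u.+1 * (1 + Fq q))) <= 16 * ((u + 1) * q ^ 3 * m ^ 2).
Proof.
move=> h1 h2 hq.
have F := Fq_le hq.
have e1 : n1 * (1 + n2 * (1 + u.+1 * (1 + Fq q))) <= m * (1 + m * (1 + u.+1 * (14 * q ^ 3))).
  apply: leq_mul => //; rewrite leq_add2l; apply: leq_mul => //; rewrite leq_add2l leq_mul2l F orbT //.
apply: leq_trans e1 _.
have hZ : 0 < (u + 1) * q ^ 3 by rewrite muln_gt0 addn1 /= expn_gt0 hq.
rewrite (_ : u.+1 * (14 * q ^ 3) = 14 * ((u + 1) * q ^ 3)); last by rewrite addn1 mulnCA.
move: hZ; move: ((u + 1) * q ^ 3) => Z hZ.
rewrite (_ : m ^ 2 = m * m); last by rewrite expnS expn1.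
have a1 : m <= m * m by case: (m) => // m'; rewrite mulSn leq_addr.
have a2 : m * m <= Z * (m * m) by rewrite leq_pmull.
rewrite (_ : m * (1 + m * (1 + 14 * Z)) = m + m * m + 14 * (Z * (m * m))); last by ssrlia.
move: (m * m) a1 a2 => M a1 a2.
ssrlia.
Qed.

Theorem mainTheorem5 :
  exists c : nat,
  forall (Name : Type) (thes : rel Name), symmetric thes ->
  forall (S1 S2 : schema Name) (u : nat)
         (cl1 : seq (xcomp S1)) (cl2 : seq (xcomp S2))
         (nb1 : xcomp S1 -> nat -> seq (xcomp S1))
         (nb2 : xcomp S2 -> nat -> seq (xcomp S2)),
  (* the complex elements of S1 and S2 are available as lists *)
  uniq cl1 -> (forall x, (x \in cl1) = complex_elem x) ->
  uniq cl2 -> (forall x, (x \in cl2) = complex_elem x) ->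
  (* the neighborhoods are available as lists *)
  (forall x v, complex_elem x -> v <= u ->
     uniq (nb1 x v) /\ (forall y, (y \in nb1 x v) = (y \in neighborhood x v))) ->
  (forall x v, complex_elem x -> v <= u ->
     uniq (nb2 x v) /\ (forall y, (y \in nb2 x v) = (y \in neighborhood x v))) ->
  let run := all_synonymiesC thes (@cname _ S1) (@cname _ S2) u nb1 nb2 cl1 cl2 in
  run.1 = [seq [seq ((E1, E2), synonymous thes E1 E2 u) | E2 <- cl2] | E1 <- cl1]
  /\ run.2 <= c * ((u + 1) * q_param S1 S2 u ^ 3 * m_param S1 S2 ^ 2).
Proof.
exists 16 => Name thes _ S1 S2 u cl1 cl2 nb1 nb2 uc1 mc1 uc2 mc2 hn1 hn2 run.
set q := q_param S1 S2 u; set m := m_param S1 S2.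
have sz1 : forall E v, complex_elem E -> v <= u -> size (nb1 E v) <= q.
  move=> E v hE hv; have [un mn] := hn1 E v hE hv.
  rewrite -(card_uniqP un) (eq_card mn) /q /q_param; apply: leq_trans (leq_maxl _ _).
  apply: leq_trans (leq_bigmax E); exact: (leq_bigmax (F := fun v : 'I_u.+1 => #|neighborhood E v|) (Ordinal (hv : v < u.+1))).
have sz2 : forall E v, complex_elem E -> v <= u -> size (nb2 E v) <= q.
  move=> E v hE hv; have [un mn] := hn2 E v hE hv.
  rewrite -(card_uniqP un) (eq_card mn) /q /q_param; apply: leq_trans (leq_maxr _ _).
  apply: leq_trans (leq_bigmax E); exact: (leq_bigmax (F := fun v : 'I_u.+1 => #|neighborhood E v|) (Ordinal (hv : v < u.+1))).
have lv : forall E1 E2, E1 \in cl1 -> E2 \in cl2 ->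
    (levelsC thes (@cname _ S1) (@cname _ S2) u nb1 nb2 E1 E2 u.+1).1 = synonymous thes E1 E2 u /\
    (levelsC thes (@cname _ S1) (@cname _ S2) u nb1 nb2 E1 E2 u.+1).2 <= u.+1 * (1 + Fq q).
  move=> E1 E2; rewrite mc1 mc2 => h1 h2.
  have [-> ->] := @levels_ok Name thes S1 S2 u nb1 nb2 E1 E2 q (fun v hv => hn1 E1 v h1 hv) (fun v hv => hn2 E2 v h2 hv)
     (fun v hv => conj (sz1 E1 v h1 hv) (sz2 E2 v h2 hv)) u.+1 (leqnn u.+1).
  by rewrite subnn syn_all.
have [r1 r2] := mapC_spec (fun E1 => mapC (fun E2 => DO b <- synonymousC thes (@cname _ S1) (@cname _ S2) u nb1 nb2 E1 E2; retC ((E1, E2), b)) cl2) cl1.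
pose g E1 := (fun E2 => DO b <- synonymousC thes (@cname _ S1) (@cname _ S2) u nb1 nb2 E1 E2; retC ((E1, E2), b)).
rewrite /run /all_synonymiesC r1 r2; split.
  apply/eq_in_map => E1 h1; have [-> _] := mapC_spec (g E1) cl2.
  by apply/eq_in_map => E2 h2; rewrite /g bind_ret /synonymousC; have [-> _] := lv E1 E2 h1 h2.
case: cl1 uc1 mc1 lv {r1 r2 run} => [|E0 cl1'] uc1 mc1 lv //.
have hE0 : complex_elem E0 by rewrite -mc1 mem_head.
have hq : 0 < q.
  apply: leq_trans (sz1 E0 0 hE0 (leq0n _)); have [_ mn] := hn1 E0 0 hE0 (leq0n _).
  have : E0 \in nb1 E0 0 by rewrite mn inE /CC_le /veryclose eqxx.
  by case: (nb1 E0 0).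
have cm1 : size (E0 :: cl1') <= m.
  rewrite -(card_uniqP uc1) /m /m_param; apply: leq_trans (leq_maxl _ _).
  by apply: subset_leq_card; apply/subsetP => x; rewrite mc1 inE.
have cm2 : size cl2 <= m.
  rewrite -(card_uniqP uc2) /m /m_param; apply: leq_trans (leq_maxr _ _).
  by apply: subset_leq_card; apply/subsetP => x; rewrite mc2 inE.
apply: leq_trans (final_arith u cm1 cm2 hq).
apply: sumn_le => E1 h1; rewrite leq_add2l; have [_ ->] := mapC_spec (g E1) cl2.
apply: sumn_le => E2 h2; rewrite leq_add2l /g bind_ret /synonymousC addn0.
by have [_ ->] := lv E1 E2 h1 h2.
Qed.
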